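(* For all integers $n\geq 1$, $\mathrm{secat}(\pi^{n+1}_3)\leq \mathrm{secat}(\pi^n_3)+2$.
   Context: $F(\mathbb{R}^n,k)=\{(x_1,\dots,x_k)\in (\mathbb{R}^n)^k : x_i\neq x_j \text{ for } i\neq j\}$, $B(\mathbb{R}^n,k)=F(\mathbb{R}^n,k)/\Sigma_k$ with $\Sigma_k$ permuting coordinates, and $\pi^n_k\colon F(\mathbb{R}^n,k)\to B(\mathbb{R}^n,k)$ is the quotient covering. $\mathrm{secat}(p)$ of a fibration $p\colon E\to B$ is the least $m$ such that $B$ can be covered by $m+1$ open sets each admitting a local section of $p$. *)

(* Defs.v *)
From mathcomp Require Import all_boot all_fingroup.
From Stdlib Require Import Reals.
Set Implicit Arguments. Unset Strict Implicit.
Open Scope R_scope.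

Definition Rpt (n : nat) := 'I_n -> R.

Definition Fconf (n k : nat) :=
  {x : 'I_k -> Rpt n | forall i j : 'I_k, x i = x j -> i = j}.

(* Open subsets of F(R^n,k) for the subspace topology of (R^n)^k = R^{nk}
   (balls of the sup-metric, which generate the Euclidean topology). *)
Definition openF (n k : nat) (A : Fconf n k -> Prop) : Prop :=
  forall x, A x -> exists eps, 0 < eps /\
    forall y : Fconf n k,
      (forall (i : 'I_k) (c : 'I_n), Rabs (proj1_sig y i c - proj1_sig x i c) < eps) ->
      A y.

Definition orbit (n k : nat) (x : Fconf n k) : Fconf n k -> Prop :=
  fun y => exists s : {perm 'I_k}, forall i, proj1_sig y i = proj1_sig x (s i).

(* B(R^n,k) = F(R^n,k)/Sigma_k : points are the Sigma_k-orbits. *)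
Definition Bconf (n k : nat) := {P : Fconf n k -> Prop | exists x, P = orbit x}.

Definition piq (n k : nat) (x : Fconf n k) : Bconf n k :=
  exist _ (orbit x) (ex_intro _ x erefl).

Definition openB (n k : nat) (O : Bconf n k -> Prop) : Prop :=
  openF (fun x => O (piq x)).

(* Continuity of s restricted to U (subspace topology on U ⊆ B). *)
Definition continuous_on (n k : nat) (U : Bconf n k -> Prop)
    (s : Bconf n k -> Fconf n k) : Prop :=
  forall W : Fconf n k -> Prop, openF W ->
    exists O : Bconf n k -> Prop, openB O /\
      forall b, U b -> (W (s b) <-> O b).

Definition local_section (n k : nat) (U : Bconf n k -> Prop)
    (s : Bconf n k -> Fconf n k) : Prop :=
  continuous_on U s /\ forall b, U b -> piq (s b) = b.

Definition secat_le (n k m : nat) : Prop :=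
  exists (U : nat -> Bconf n k -> Prop) (s : nat -> Bconf n k -> Fconf n k),
    (forall i, (i <= m)%nat -> openB (U i) /\ local_section (U i) (s i)) /\
    (forall b, exists i, (i <= m)%nat /\ U i b).

(* Main.v *)
Require Import Defs.
From mathcomp Require Import all_boot all_fingroup.
From Stdlib Require Import Reals Lra Classical ClassicalEpsilon FunctionalExtensionality PropExtensionality ProofIrrelevance.
Set Implicit Arguments. Unset Strict Implicit.
Open Scope R_scope.

Definition close (N k : nat) (d : R) (a b : 'I_k -> Rpt N) :=
  forall i c, Rabs (b i c - a i c) < d.

Definition cperm (N k : nat) (a : 'I_k -> Rpt N) (p : {perm 'I_k}) : 'I_k -> Rpt N :=
  fun i => a (p i).

Lemma perm_conf_inj N k (x : Fconf N k) (p : {perm 'I_k}) :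
  forall i j, proj1_sig x (p i) = proj1_sig x (p j) -> i = j.
Proof. move=> i j /(proj2_sig x) /perm_inj. done. Qed.

Definition Fperm N k (x : Fconf N k) (p : {perm 'I_k}) : Fconf N k :=
  exist _ (cperm (proj1_sig x) p) (@perm_conf_inj N k x p).

Lemma Beq N k (b1 b2 : Bconf N k) : proj1_sig b1 = proj1_sig b2 -> b1 = b2.
Proof. destruct b1 as [P1 h1], b2 as [P2 h2]; simpl => e; subst; f_equal; apply proof_irrelevance. Qed.

Lemma orbit_perm N k (x y : Fconf N k) (t : {perm 'I_k}) :
  (forall i, proj1_sig y i = proj1_sig x (t i)) -> Defs.orbit y = Defs.orbit x.
Proof.
move=> H; apply: functional_extensionality => z; apply: propositional_extensionality; split.
- case=> s Hs; exists (s * t)%g => i; rewrite Hs H permM. done.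
- case=> s Hs; exists (s * t^-1)%g => i; rewrite Hs permM H permKV. done.
Qed.

Lemma piq_perm N k (x y : Fconf N k) (t : {perm 'I_k}) :
  (forall i, proj1_sig y i = proj1_sig x (t i)) -> piq y = piq x.
Proof. move=> H; apply: Beq; exact: (orbit_perm H). Qed.

Lemma piq_orbit N k (x y : Fconf N k) : piq y = piq x ->
  exists t : {perm 'I_k}, forall i, proj1_sig y i = proj1_sig x (t i).
Proof.
move=> /(f_equal (@proj1_sig _ _)) /= E.
have : Defs.orbit y y by exists 1%g => i; rewrite perm1.
by rewrite E.
Qed.

Definition rep N k (b : Bconf N k) : Fconf N k :=
  proj1_sig (constructive_indefinite_description _ (proj2_sig b)).
Lemma rep_spec N k (b : Bconf N k) : proj1_sig b = Defs.orbit (rep b).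
Proof. exact (proj2_sig (constructive_indefinite_description _ (proj2_sig b))). Qed.
Lemma piq_rep N k (b : Bconf N k) : piq (rep b) = b.
Proof. apply: Beq; rewrite [in RHS]rep_spec; reflexivity. Qed.
Lemma rep_piq N k (x : Fconf N k) : exists t : {perm 'I_k},
  forall i, proj1_sig (rep (piq x)) i = proj1_sig x (t i).
Proof. apply: piq_orbit; exact: piq_rep. Qed.

Definition Vg N k (Rp : ('I_k -> Rpt N) -> Prop) (x : Fconf N k) :=
  exists p, Rp (cperm (proj1_sig x) p).

Definition pi_of N k (Rp : ('I_k -> Rpt N) -> Prop) (x : Fconf N k) : {perm 'I_k} :=
  match excluded_middle_informative (Vg Rp x) with
  | left H => proj1_sig (constructive_indefinite_description _ H)
  | right _ => 1%g end.

Lemma pi_spec N k Rp (x : Fconf N k) : Vg Rp x -> Rp (cperm (proj1_sig x) (pi_of Rp x)).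
Proof.
move=> Vx; rewrite /pi_of; case: excluded_middle_informative => // H.
exact: (proj2_sig (constructive_indefinite_description _ H)).
Qed.

Definition Ug N k (Rp : ('I_k -> Rpt N) -> Prop) (b : Bconf N k) := Vg Rp (rep b).
Definition sg N k (Rp : ('I_k -> Rpt N) -> Prop) (b : Bconf N k) : Fconf N k :=
  Fperm (rep b) (pi_of Rp (rep b)).

Lemma Vperm N k Rp (x y : Fconf N k) (t : {perm 'I_k}) :
  (forall i, proj1_sig y i = proj1_sig x (t i)) -> Vg Rp x -> Vg Rp y.
Proof.
move=> H [p Hp]; exists (p * t^-1)%g.
have -> : cperm (proj1_sig y) (p * t^-1)%g = cperm (proj1_sig x) p.
  by apply: functional_extensionality => i; rewrite /cperm permM H permKV.
done.
Qed.

Lemma UV N k Rp (x : Fconf N k) : Ug Rp (piq x) <-> Vg Rp x.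
Proof.
have [t Ht] := rep_piq x; rewrite /Ug; split.
- apply: (Vperm (t := t^-1%g)) => i; by rewrite Ht permKV.
- exact: Vperm Ht.
Qed.

Lemma key N k Rp (x : Fconf N k) : Vg Rp x -> exists r,
  Rp (cperm (proj1_sig x) r) /\ proj1_sig (sg Rp (piq x)) = cperm (proj1_sig x) r.
Proof.
move=> Vx; have [t Ht] := rep_piq x.
have Vr : Vg Rp (rep (piq x)) by apply: Vperm Ht Vx.
exists (pi_of Rp (rep (piq x)) * t)%g.
have E : cperm (proj1_sig x) (pi_of Rp (rep (piq x)) * t)%g
   = cperm (proj1_sig (rep (piq x))) (pi_of Rp (rep (piq x))).
  by apply: functional_extensionality => i; rewrite /cperm permM Ht.
rewrite E; split; first exact: pi_spec.
done.
Qed.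

Lemma gen_section N k (Rp : ('I_k -> Rpt N) -> Prop)
  (Hu : forall (x : Fconf N k) (p q : {perm 'I_k}),
     Rp (cperm (proj1_sig x) p) -> Rp (cperm (proj1_sig x) q) -> p = q)
  (Ho : forall a, Rp a -> exists d, 0 < d /\ forall b, close d a b -> Rp b) :
  openB (Ug Rp) /\ local_section (Ug Rp) (sg Rp).
Proof.
split.
  move=> x /UV [p Hp]; have [d [d0 Hd]] := Ho _ Hp.
  exists d; split => // y Hy; apply/UV; exists p; apply: Hd => i c; exact: Hy.
split.
  move=> W HW; exists (fun b => Ug Rp b /\ W (sg Rp b)); split; last first.
    by move=> b Ub; split; [move=> ?; split | case].
  move=> x [/UV Vx Wx]; have [r [Rr Er]] := key Vx.
  have [e [e0 He]] := HW _ Wx; have [d [d0 Hd]] := Ho _ Rr.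
  exists (Rmin e d); split; first exact: Rmin_glb_lt.
  move=> y Hy.
  have Ry : Rp (cperm (proj1_sig y) r).
    apply: Hd => i c; have := Hy (r i) c; have := Rmin_r e d; rewrite /cperm; lra.
  have Vy : Vg Rp y by exists r.
  split; first exact/UV.
  have [r' [Rr' Er']] := key Vy.
  have rr : r' = r := Hu y _ _ Rr' Ry.
  apply: He => i c; rewrite Er' Er rr /cperm.
  have := Hy (r i) c; have := Rmin_l e d; lra.
move=> b Ub; rewrite /sg.
rewrite (piq_perm (x := rep b) (t := pi_of Rp (rep b))) //; exact: piq_rep.
Qed.

Definition distl (N : nat) (l : seq 'I_N) (u v : Rpt N) : R :=
  foldr (fun c acc => Rmax (Rabs (u c - v c)) acc) 0 l.
Definition dist N (u v : Rpt N) := distl (enum 'I_N) u v.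

Lemma distl_ge0 N l (u v : Rpt N) : 0 <= distl l u v.
Proof. elim: l => [|c l IH] /=; first lra. exact: Rle_trans IH (Rmax_r _ _). Qed.

Lemma distl_sym N l (u v : Rpt N) : distl l u v = distl l v u.
Proof. elim: l => [|c l IH] //=; by rewrite IH Rabs_minus_sym. Qed.

Lemma distl_coord N l (u v : Rpt N) c : c \in l -> Rabs (u c - v c) <= distl l u v.
Proof.
elim: l => [|c' l IH] //=; rewrite in_cons => /orP [/eqP -> | H].
  exact: Rmax_l.
exact: Rle_trans (IH H) (Rmax_r _ _).
Qed.

Lemma distl_le N l (u v : Rpt N) e : 0 <= e -> (forall c, Rabs (u c - v c) <= e) -> distl l u v <= e.
Proof. move=> e0 H; elim: l => [|c l IH] //=; exact: Rmax_lub. Qed.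

Lemma distl_lip N l (u v u' v' : Rpt N) e : 0 <= e ->
  (forall c, Rabs (u c - u' c) <= e) -> (forall c, Rabs (v c - v' c) <= e) ->
  distl l u' v' <= distl l u v + 2 * e.
Proof.
move=> e0 Hu Hv; elim: l => [|c l IH] /=; first lra.
apply: Rmax_lub.
  apply: Rle_trans (_ : Rabs (u c - v c) + 2 * e <= _); last first.
    apply: Rplus_le_compat_r; exact: Rmax_l.
  have := Hu c; have := Hv c; split_Rabs; lra.
apply: Rle_trans IH _; apply: Rplus_le_compat_r; exact: Rmax_r.
Qed.

Lemma dist_self N (u : Rpt N) : dist u u = 0.
Proof.
apply: Rle_antisym; last exact: distl_ge0.
apply: distl_le => [|c]; first lra. rewrite Rminus_diag_eq // Rabs_R0; lra.
Qed.

Lemma dist_pos N (u v : Rpt N) : u <> v -> 0 < dist u v.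
Proof.
move=> Huv; apply: NNPP => H.
apply: Huv; apply: functional_extensionality => c.
have := @distl_coord N (enum 'I_N) u v c; rewrite mem_enum => /(_ isT).
have := @distl_ge0 N (enum 'I_N) u v. rewrite /dist in H.
move=> h1 h2.
have : Rabs (u c - v c) = 0 by have := Rabs_pos (u c - v c); lra.
move=> h3; apply: NNPP => h4; apply: (Rabs_no_R0 (u c - v c)) => //. lra.
Qed.

Lemma dist_le N (u v : Rpt N) e : 0 <= e -> (forall c, Rabs (u c - v c) <= e) -> dist u v <= e.
Proof. exact: distl_le. Qed.
Lemma dist_sym N (u v : Rpt N) : dist u v = dist v u.
Proof. exact: distl_sym. Qed.
Lemma dist_lip N (u v u' v' : Rpt N) e : 0 <= e ->
  (forall c, Rabs (u c - u' c) <= e) -> (forall c, Rabs (v c - v' c) <= e) ->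
  dist u' v' <= dist u v + 2 * e.
Proof. exact: distl_lip. Qed.

Definition i0 : 'I_3 := Ordinal (isT : (0 < 3)%nat).
Definition i1 : 'I_3 := Ordinal (isT : (1 < 3)%nat).
Definition i2 : 'I_3 := Ordinal (isT : (2 < 3)%nat).

Lemma ord3 (i : 'I_3) : i = i0 \/ i = i1 \/ i = i2.
Proof.
case: i => [[|[|[|m]]] h]; [left|right;left|right;right|done]; exact: val_inj.
Qed.

Lemma i01 : i0 <> i1. Proof. by move/(f_equal val). Qed.
Lemma i02 : i0 <> i2. Proof. by move/(f_equal val). Qed.
Lemma i12 : i1 <> i2. Proof. by move/(f_equal val). Qed.

Ltac kill_dup p :=
  match goal with
  | h : fun_of_perm p ?a = ?v, h' : fun_of_perm p ?b = ?v |- _ =>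
     let E := fresh in
     assert (E : a = b) by (apply: (@perm_inj _ p); by rewrite h h');
     first [ exact: (i01 E) | exact: (i02 E) | exact: (i12 E)
           | exact: (i01 (esym E)) | exact: (i02 (esym E)) | exact: (i12 (esym E)) ]
  end.

Lemma perm3_vals (p : {perm 'I_3}) :
  (p i0 = i0 /\ p i1 = i1 /\ p i2 = i2) \/ (p i0 = i0 /\ p i1 = i2 /\ p i2 = i1) \/
  (p i0 = i1 /\ p i1 = i0 /\ p i2 = i2) \/ (p i0 = i1 /\ p i1 = i2 /\ p i2 = i0) \/
  (p i0 = i2 /\ p i1 = i0 /\ p i2 = i1) \/ (p i0 = i2 /\ p i1 = i1 /\ p i2 = i0).
Proof.
have [h0|[h0|h0]] := ord3 (p i0); have [h1|[h1|h1]] := ord3 (p i1);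
  have [h2|[h2|h2]] := ord3 (p i2); try tauto; exfalso; kill_dup p.
Qed.

Lemma perm3_eq (p q : {perm 'I_3}) : p i0 = q i0 -> p i1 = q i1 -> p i2 = q i2 -> p = q.
Proof. move=> h0 h1 h2; apply/permP => i; by have [->|[->|->]] := ord3 i. Qed.

Lemma mk3 (a b c : 'I_3) : a <> b -> a <> c -> b <> c ->
  exists p : {perm 'I_3}, p i0 = a /\ p i1 = b /\ p i2 = c.
Proof.
move=> ab ac bc.
pose f (i : 'I_3) := if val i == 0%nat then a else if val i == 1%nat then b else c.
have finj : injective f.
  move=> i j; rewrite /f.
  have [->|[->|->]] := ord3 i; have [->|[->|->]] := ord3 j => //= E;
   first [ by case: ab | by case: ac | by case: bc
         | by case: ab; rewrite E | by case: ac; rewrite E | by case: bc; rewrite E ].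
exists (perm finj); rewrite !permE; done.
Qed.

Ltac neq3 := first [ exact: i01 | exact: i02 | exact: i12
       | move/esym; exact: i01 | move/esym; exact: i02 | move/esym; exact: i12 ].
Ltac third_rest := split; [neq3 | split; [neq3 | move=> l; have [->|[->|->]] := ord3 l; tauto]].

Lemma third (j k : 'I_3) : j <> k -> exists i, i <> j /\ i <> k /\ forall l, l = i \/ l = j \/ l = k.
Proof.
move=> jk.
have [E1|[E1|E1]] := ord3 j; have [E2|[E2|E2]] := ord3 k; subst => //;
 first [ exists i0; third_rest | exists i1; third_rest | exists i2; third_rest ].
Qed.

Definition prj n (u : Rpt (n + 1)) : Rpt n := fun c => u (widen_ord (leq_addr 1 n) c).
Definition tord n : 'I_(n + 1) := Ordinal (n:=n+1) (m:=n) ltac:(by rewrite addn1).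
Definition tl n (u : Rpt (n + 1)) : R := u (tord n).

Lemma pt_inj n (u v : Rpt (n+1)) : prj u = prj v -> tl u = tl v -> u = v.
Proof.
move=> Hp Ht; apply: functional_extensionality => -[c hc].
case: (ltnP c n) => h.
  have := f_equal (fun f => f (Ordinal h)) Hp; rewrite /prj.
  have -> : widen_ord (leq_addr 1 n) (Ordinal h) = Ordinal hc by apply: val_inj.
  done.
have h' := hc; rewrite addn1 in h'.
rewrite ltnS in h'.
have E : c = n by (apply/eqP; rewrite eqn_leq h h').
subst c. have -> : Ordinal hc = tord n by apply: val_inj.
exact Ht.
Qed.

Ltac case3 j := have [->|[->|->]] := ord3 j.

Lemma rigid N (z : Fconf N 3) : exists e, 0 < e /\ forall j j',
  (forall c, Rabs (proj1_sig z j c - proj1_sig z j' c) < 3 * e) -> j = j'.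
Proof.
set Z := proj1_sig z.
have dp : forall j j', j <> j' -> 0 < dist (Z j) (Z j').
  move=> j j' jj; apply: dist_pos => E; apply: jj; exact: (proj2_sig z _ _ E).
have d01 := dp _ _ i01; have d02 := dp _ _ i02; have d12 := dp _ _ i12.
set m := Rmin (dist (Z i0) (Z i1)) (Rmin (dist (Z i0) (Z i2)) (dist (Z i1) (Z i2))).
have m1 : m <= dist (Z i0) (Z i1) by apply: Rmin_l.
have m2 : m <= dist (Z i0) (Z i2) by apply: Rle_trans (Rmin_r _ _) (Rmin_l _ _).
have m3 : m <= dist (Z i1) (Z i2) by apply: Rle_trans (Rmin_r _ _) (Rmin_r _ _).
have m0 : 0 < m by apply: Rmin_glb_lt => //; apply: Rmin_glb_lt.
exists (m / 4); split; first lra.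
move=> j j' H; apply: NNPP => jj.
have : dist (Z j) (Z j') <= 3 * (m / 4).
  apply: dist_le => [|c]; first lra. exact: Rlt_le (H c).
move: jj; case3 j; case3 j' => jj; try (by case: jj);
 rewrite ?(dist_sym (Z i1) (Z i0)) ?(dist_sym (Z i2) (Z i0)) ?(dist_sym (Z i2) (Z i1)); lra.
Qed.

Ltac dperm p P0 P1 P2 :=
  have [[P0 [P1 P2]]|[[P0 [P1 P2]]|[[P0 [P1 P2]]|[[P0 [P1 P2]]|[[P0 [P1 P2]]|[P0 [P1 P2]]]]]]] := perm3_vals p.

Definition RT n (a : 'I_3 -> Rpt (n+1)) := tl (a i0) < tl (a i1) /\ tl (a i1) < tl (a i2).

Lemma RT_u n (x : Fconf (n+1) 3) (p q : {perm 'I_3}) :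
  RT (cperm (proj1_sig x) p) -> RT (cperm (proj1_sig x) q) -> p = q.
Proof.
rewrite /RT /cperm => -[a1 a2] [b1 b2].
dperm p P0 P1 P2; rewrite ?P0 ?P1 ?P2 in a1 a2;
dperm q Q0 Q1 Q2; rewrite ?Q0 ?Q1 ?Q2 in b1 b2;
first [ exfalso; lra | apply: perm3_eq; congruence ].
Qed.

Lemma close_coord N (d : R) (a b : 'I_3 -> Rpt N) j c : close d a b ->
  a j c - d < b j c < a j c + d.
Proof. move=> H; have := H j c; move/Rabs_def2; lra. Qed.

Lemma RT_o n (a : 'I_3 -> Rpt (n+1)) : RT a -> exists d, 0 < d /\ forall b, close d a b -> RT b.
Proof.
rewrite /RT /tl => -[h1 h2].
set g := Rmin (a i1 (tord n) - a i0 (tord n)) (a i2 (tord n) - a i1 (tord n)).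
have g1 := Rmin_l (a i1 (tord n) - a i0 (tord n)) (a i2 (tord n) - a i1 (tord n)).
have g2 := Rmin_r (a i1 (tord n) - a i0 (tord n)) (a i2 (tord n) - a i1 (tord n)).
have g0 : 0 < g by apply: Rmin_glb_lt; lra.
exists (g / 2); split; first lra.
move=> b H.
have := close_coord i0 (tord n) H; have := close_coord i1 (tord n) H;
have := close_coord i2 (tord n) H. rewrite -/g in g1 g2. lra.
Qed.

Definition Dp n (u v : Rpt (n+1)) := dist (prj u) (prj v).
Definition RC n (a : 'I_3 -> Rpt (n+1)) :=
  Dp (a i1) (a i2) < Dp (a i0) (a i1) /\ Dp (a i1) (a i2) < Dp (a i0) (a i2) /\
  tl (a i1) < tl (a i2).

Lemma RC_u n (x : Fconf (n+1) 3) (p q : {perm 'I_3}) :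
  RC (cperm (proj1_sig x) p) -> RC (cperm (proj1_sig x) q) -> p = q.
Proof.
set X := proj1_sig x.
have s10 : Dp (X i1) (X i0) = Dp (X i0) (X i1) by exact: dist_sym.
have s20 : Dp (X i2) (X i0) = Dp (X i0) (X i2) by exact: dist_sym.
have s21 : Dp (X i2) (X i1) = Dp (X i1) (X i2) by exact: dist_sym.
rewrite /RC /cperm => -[a1 [a2 a3]] [b1 [b2 b3]].
dperm p P0 P1 P2; rewrite ?P0 ?P1 ?P2 ?s10 ?s20 ?s21 in a1 a2 a3;
dperm q Q0 Q1 Q2; rewrite ?Q0 ?Q1 ?Q2 ?s10 ?s20 ?s21 in b1 b2 b3;
first [ exfalso; lra | apply: perm3_eq; congruence ].
Qed.

Lemma Dp_lip n (d : R) (a b : 'I_3 -> Rpt (n+1)) j k : 0 <= d -> close d a b ->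
  Dp (b j) (b k) <= Dp (a j) (a k) + 2 * d /\ Dp (a j) (a k) <= Dp (b j) (b k) + 2 * d.
Proof.
move=> d0 H; split; apply: dist_lip => // c; rewrite /prj;
 have := H j (widen_ord (leq_addr 1 n) c); have := H k (widen_ord (leq_addr 1 n) c);
 rewrite Rabs_minus_sym; move=> h1 h2; apply: Rlt_le; try done; rewrite Rabs_minus_sym; done.
Qed.

Lemma RC_o n (a : 'I_3 -> Rpt (n+1)) : RC a -> exists d, 0 < d /\ forall b, close d a b -> RC b.
Proof.
rewrite /RC => -[h1 [h2 h3]].
set g1 := Dp (a i0) (a i1) - Dp (a i1) (a i2).
set g2 := Dp (a i0) (a i2) - Dp (a i1) (a i2).
set g3 := tl (a i2) - tl (a i1).
set g := Rmin g1 (Rmin g2 g3).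
have e1 : g <= g1 by apply: Rmin_l.
have e2 : g <= g2 by apply: Rle_trans (Rmin_r _ _) (Rmin_l _ _).
have e3 : g <= g3 by apply: Rle_trans (Rmin_r _ _) (Rmin_r _ _).
have g0 : 0 < g by apply: Rmin_glb_lt; [|apply: Rmin_glb_lt]; rewrite /g1 /g2 /g3; lra.
exists (g / 5); split; first lra.
move=> b H.
have d0 : 0 <= g / 5 by lra.
have [u1 v1] := Dp_lip i0 i1 d0 H; have [u2 v2] := Dp_lip i0 i2 d0 H;
have [u3 v3] := Dp_lip i1 i2 d0 H.
have := close_coord i1 (tord n) H; have := close_coord i2 (tord n) H.
rewrite /g1 /g2 /g3 /tl in e1 e2 e3. rewrite /tl. lra.
Qed.

Definition Rpull n m (U : nat -> Bconf n 3 -> Prop) (s : nat -> Bconf n 3 -> Fconf n 3)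
  (i : nat) (a : 'I_3 -> Rpt (n+1)) :=
  (i <= m)%nat /\ exists z : Fconf n 3, proj1_sig z = (fun j => prj (a j)) /\
    U i (piq z) /\ proj1_sig (s i (piq z)) = proj1_sig z.

Lemma Rpull_u n m U s i (x : Fconf (n+1) 3) (p q : {perm 'I_3}) :
  Rpull m U s i (cperm (proj1_sig x) p) -> Rpull m U s i (cperm (proj1_sig x) q) -> p = q.
Proof.
move=> [_ [z [Ez [Uz Sz]]]] [_ [z' [Ez' [Uz' Sz']]]].
have E : piq z' = piq z.
  apply: (piq_perm (t := (q * p^-1)%g)) => j.
  by rewrite Ez Ez' /cperm permM permKV.
have E2 : proj1_sig z' = proj1_sig z by rewrite -Sz -Sz' E.
apply/permP => j.
have h : proj1_sig z (p^-1 (q j))%g = proj1_sig z j.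
  by rewrite -[in RHS]E2 Ez Ez' /cperm permKV.
have := proj2_sig z _ _ h => e.
by rewrite -{1}e permKV.
Qed.

Lemma Rpull_o n m (U : nat -> Bconf n 3 -> Prop) s i
  (HUs : forall i, (i <= m)%nat -> openB (U i) /\ local_section (U i) (s i))
  (a : 'I_3 -> Rpt (n+1)) : Rpull m U s i a ->
  exists d, 0 < d /\ forall b, close d a b -> Rpull m U s i b.
Proof.
move=> [him [z [Ez [Uz Sz]]]].
have [e [e0 He]] := rigid z.
have [oU [cont sec]] := HUs i him.
have [d1 [d10 Hd1]] := oU z Uz.
pose W (w : Fconf n 3) := exists eta, eta < e /\
   forall j c, Rabs (proj1_sig w j c - proj1_sig z j c) < eta.
have oW : openF W.
  move=> w [eta [he Hw]]; exists ((e - eta) / 2); split; first lra.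
  move=> y Hy; exists (eta + (e - eta) / 2); split; first lra.
  move=> j c; have := Hy j c; have := Hw j c; split_Rabs; lra.
have [O [oO HO]] := cont W oW.
have Oz : O (piq z).
  apply/(HO _ Uz); exists (e / 2); split; first lra.
  move=> j c; rewrite Sz Rminus_diag_eq // Rabs_R0; lra.
have [d2 [d20 Hd2]] := oO z Oz.
exists (Rmin e (Rmin d1 d2)); split.
  by apply: Rmin_glb_lt => //; apply: Rmin_glb_lt.
move=> b Hb.
have m1 := Rmin_l e (Rmin d1 d2).
have m2 := Rle_trans _ _ _ (Rmin_r e (Rmin d1 d2)) (Rmin_l d1 d2).
have m3 := Rle_trans _ _ _ (Rmin_r e (Rmin d1 d2)) (Rmin_r d1 d2).
set dd := Rmin e (Rmin d1 d2) in Hb m1 m2 m3.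
have Zc : forall j c, Rabs (prj (b j) c - proj1_sig z j c) < dd.
  move=> j c; rewrite Ez /prj; exact: Hb.
have injb : forall j j', prj (b j) = prj (b j') -> j = j'.
  move=> j j' E; apply: He => c; have := Zc j c; have := Zc j' c; rewrite E.
  split_Rabs; lra.
pose zb : Fconf n 3 := exist _ (fun j => prj (b j)) injb.
split => //; exists zb; split => //.
have Uzb : U i (piq zb) by apply: Hd1 => j c; rewrite /zb /=; have := Zc j c; lra.
have Ozb : O (piq zb) by apply: Hd2 => j c; rewrite /zb /=; have := Zc j c; lra.
split => //.
have [eta [he Hw]] := (proj2 (HO _ Uzb) Ozb).
have [r Hr] := piq_orbit (sec _ Uzb).
have rid : forall j, r j = j.
  move=> j; apply: esym; apply: He => c.
  have := Hw j c; have := Zc (r j) c; rewrite Hr /=.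
  split_Rabs; lra.
apply: functional_extensionality => j; by rewrite Hr rid.
Qed.

Lemma sort3 (T : 'I_3 -> R) : (forall j j', T j = T j' -> j = j') ->
  exists p : {perm 'I_3}, T (p i0) < T (p i1) /\ T (p i1) < T (p i2).
Proof.
move=> inj.
have n01 : T i0 <> T i1 by move=> E; exact: i01 (inj _ _ E).
have n02 : T i0 <> T i2 by move=> E; exact: i02 (inj _ _ E).
have n12 : T i1 <> T i2 by move=> E; exact: i12 (inj _ _ E).
have [a|a] := Rdichotomy _ _ n01; have [b|b] := Rdichotomy _ _ n02;
have [c|c] := Rdichotomy _ _ n12;
first [ exfalso; lra
      | have [p [P0 [P1 P2]]] := @mk3 i0 i1 i2 ltac:(neq3) ltac:(neq3) ltac:(neq3);
          exists p; rewrite P0 P1 P2; lra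
      | have [p [P0 [P1 P2]]] := @mk3 i0 i2 i1 ltac:(neq3) ltac:(neq3) ltac:(neq3);
          exists p; rewrite P0 P1 P2; lra
      | have [p [P0 [P1 P2]]] := @mk3 i1 i0 i2 ltac:(neq3) ltac:(neq3) ltac:(neq3);
          exists p; rewrite P0 P1 P2; lra
      | have [p [P0 [P1 P2]]] := @mk3 i1 i2 i0 ltac:(neq3) ltac:(neq3) ltac:(neq3);
          exists p; rewrite P0 P1 P2; lra
      | have [p [P0 [P1 P2]]] := @mk3 i2 i0 i1 ltac:(neq3) ltac:(neq3) ltac:(neq3);
          exists p; rewrite P0 P1 P2; lra
      | have [p [P0 [P1 P2]]] := @mk3 i2 i1 i0 ltac:(neq3) ltac:(neq3) ltac:(neq3);
          exists p; rewrite P0 P1 P2; lra ].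
Qed.

Lemma coverC n (x : Fconf (n+1) 3) i j k : i <> j -> i <> k -> j <> k ->
  prj (proj1_sig x j) = prj (proj1_sig x k) -> prj (proj1_sig x i) <> prj (proj1_sig x j) ->
  exists p, RC (cperm (proj1_sig x) p).
Proof.
set X := proj1_sig x => ij ik jk E pi.
have tjk : tl (X j) <> tl (X k).
  move=> Et; apply: jk; apply: (proj2_sig x); exact: pt_inj.
have d0 : Dp (X j) (X k) = 0 by rewrite /Dp E dist_self.
have d1 : 0 < Dp (X i) (X j) by apply: dist_pos.
have d2 : 0 < Dp (X i) (X k) by rewrite /Dp -E; apply: dist_pos.
have d0' : Dp (X k) (X j) = 0 by rewrite /Dp E dist_self.
have [a|a] := Rdichotomy _ _ tjk.
  have [p [P0 [P1 P2]]] := mk3 ij ik jk.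
  exists p; rewrite /RC /cperm P0 P1 P2; lra.
have [p [P0 [P1 P2]]] := mk3 ik ij (fun e => jk (esym e)).
exists p; rewrite /RC /cperm P0 P1 P2; lra.
Qed.

Theorem mainTheorem11 :
  forall n : nat, (1 <= n)%nat ->
  forall m : nat, secat_le n 3 m -> secat_le (n + 1) 3 (m + 2).
Proof.
move=> n _ m [U [s [HUs Hcov]]].
pose Rfam (i : nat) : ('I_3 -> Rpt (n+1)) -> Prop :=
  if (i <= m)%nat then Rpull m U s i else if i == m.+1 then @RC n else @RT n.
exists (fun i => Ug (Rfam i)), (fun i => sg (Rfam i)); split.
  move=> i _; apply: gen_section.
    rewrite /Rfam; case: ifP => _; [exact: Rpull_u | case: ifP => _; [exact: RC_u | exact: RT_u]].
  rewrite /Rfam; case: ifP => _; [exact: (Rpull_o HUs) | case: ifP => _; [exact: RC_o | exact: RT_o]].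
move=> b; rewrite -(piq_rep b); set x := rep b; set X := proj1_sig x.
case: (classic (forall j j', prj (X j) = prj (X j') -> j = j')) => [inj | ninj].
  pose z : Fconf n 3 := exist _ (fun j => prj (X j)) inj.
  have [i [him Ui]] := Hcov (piq z).
  exists i; split; first by rewrite (leq_trans him) // leq_addr.
  apply/UV; rewrite /Rfam him.
  have [_ [_ sec]] := HUs i him.
  have [r Hr] := piq_orbit (sec _ Ui).
  exists r; split => //; exists (s i (piq z)); split.
    by apply: functional_extensionality => j; rewrite Hr.
  by rewrite (sec _ Ui).
have [j [k [jk E]]] : exists j k, j <> k /\ prj (X j) = prj (X k).
  apply: NNPP => H; apply: ninj => j j' E; apply: NNPP => ne; apply: H; by exists j, j'.
case: (classic (forall j j', tl (X j) = tl (X j') -> j = j')) => [tinj | tninj].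
  exists (m + 2)%nat; split; first by [].
  apply/UV; rewrite /Rfam.
  have -> : (m + 2 <= m)%nat = false by rewrite addn2 ltnNge ltnW.
  have -> : (m + 2 == m.+1)%nat = false by rewrite addn2 eqSS (gtn_eqF (ltnSn m)).
  exact: (sort3 (T := fun j => tl (X j))).
have [j' [k' [jk' E']]] : exists j k, j <> k /\ tl (X j) = tl (X k).
  apply: NNPP => H; apply: tninj => j1 j2 E1; apply: NNPP => ne; apply: H; by exists j1, j2.
have [i [ij [ik all]]] := third jk.
have pi : prj (X i) <> prj (X j).
  move=> Eij.
  have al : forall l, prj (X l) = prj (X j).
    by move=> l; have [->|[->|->]] := all l.
  apply: jk'; apply: (proj2_sig x); apply: pt_inj => //; by rewrite !al.
exists m.+1; split; first by rewrite addn2 ltnW.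
apply/UV; rewrite /Rfam ltnn eqxx.
exact: (coverC ij ik jk E pi).
Qed.
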